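(* Let $X=(X,a)$ be a $\mathbb T$-category and $\psi\in\hat X$. Then $\psi$, regarded as a $\mathbb T$-module $X\to E$, is a right adjoint $\mathbb T$-module if and only if $\psi$ belongs to the L-closure of $y(X)$ in $\hat X$.
   Context: Let $\mathsf V=(\mathsf V,\otimes,k)$ be a commutative unital quantale (complete lattice, commutative associative $\otimes$ with neutral $k$, $u\otimes(-)$ preserving suprema), internal hom $z\le u\multimap v\iff z\otimes u\le v$. A $\mathsf V$-relation $r$ from $X$ to $Y$ is a map $X\times Y\to\mathsf V$; composition $(s\cdot r)(x,z)=\bigvee_y r(x,y)\otimes s(y,z)$, converse $r^\circ(y,x)=r(x,y)$, pointwise order; a map $f$ is the relation $f(x,y)=k$ if $f(x)=y$, $\bot$ otherwise. Let $\mathbb T=(T,e,m)$ be a Set-monad with $T1=1$, $T$ sending pullbacks to weak pullbacks and each naturality square of $m$ a weak pullback, and $\xi:T\mathsf V\to\mathsf V$ with $\xi e_{\mathsf V}=1$, $\xi\cdot T\xi=\xi\cdot m_{\mathsf V}$, $\xi\cdot T(\otimes)=\otimes\cdot\langle\xi T\pi_1,\xi T\pi_2\rangle$, $\xi\cdot Tk=k$, and such that $\varphi\mapsto\xi\cdot T\varphi$, $\mathsf V^X\to\mathsf V^{TX}$, is natural w.r.t. the monotone maps $P_{\mathsf V}f(\varphi)(y)=\bigvee_{f(x)=y}\varphi(x)$ (a strict topological theory). For a relation $r$ from $X$ to $Y$ let $T_\xi r(\mathfrak x,\mathfrak y)=\bigvee\{\xi(Tr(\mathfrak w))\mid\mathfrak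 w\in T(X\times Y),T\pi_1\mathfrak w=\mathfrak x,T\pi_2\mathfrak w=\mathfrak y\}$. A $\mathbb T$-relation from $X$ to $Y$ is a $\mathsf V$-relation from $TX$ to $Y$; Kleisli composition $b\circ a=b\cdot T_\xi a\cdot m_X^\circ$. A $\mathbb T$-category $(X,a)$ has $k\le a(e_X(x),x)$ and $a\circ a\le a$; a $\mathbb T$-functor $f:(X,a)\to(Y,b)$ satisfies $a(\mathfrak x,x)\le b(Tf(\mathfrak x),f(x))$; subsets carry the induced structure. $E=(1,k)$. A $\mathbb T$-module $\varphi:(X,a)\to(Y,b)$ is a $\mathbb T$-relation with $\varphi\circ a\le\varphi$ and $b\circ\varphi\le\varphi$. A module $\psi:X\to E$ is right adjoint if there is a module $\varphi:E\to X$ with $k\le\psi\circ\varphi$ and $\varphi\circ\psi\le a$. For points of $(Y,b)$, $u\cong v$ means $k\le b(e_Y(u),v)$ and $k\le b(e_Y(v),u)$; the L-closure of $M\subseteq Y$ is $\overline M=\{u\mid$ for all $\mathbb T$-functors $f,g:Y\to Z$ with $f|_M=g|_M$, $f(u)\cong g(u)\}$. $\mathsf V$ is a $\mathbb T$-category with $\hom_\xi(\mathfrak v,v)=\xi(\mathfrak v)\multimap v$; $|X|=(TX,m_X)$; $|X|\multimap\mathsf V$ is the set of $\mathbb T$-functors $|X|\to\mathsf V$ with structure $[m_X,\hom_\xi](\mathfrak p,h)=\bigwedge\{\xi(T\mathrm{ev}(\mathfrak q))\multimap h(m_X(T\pi_1\mathfrak q))\mid\mathfrak q\in T(TX\times(|X|\multimap\mathsf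 V)),T\pi_2\mathfrak q=\mathfrak p\}$, $\mathrm{ev}(\mathfrak x,\varphi)=\varphi(\mathfrak x)$. With $r(\mathfrak x,\mathfrak y)=\bigvee_{m_X(\mathfrak X)=\mathfrak x}T_\xi a(\mathfrak X,\mathfrak y)$, $X^{\mathrm{op}}=(TX,c)$ with $c(\mathfrak X,\mathfrak y)=T_\xi(r^\circ)(\mathfrak X,e_{TX}(\mathfrak y))$. $\hat X\subseteq|X|\multimap\mathsf V$ consists of those $\psi$ which are also $\mathbb T$-functors $X^{\mathrm{op}}\to\mathsf V$, with induced structure; each $\psi\in\hat X$ is a $\mathbb T$-module $X\to E$ via $\psi(\mathfrak x,\star)=\psi(\mathfrak x)$. The Yoneda functor is $y:X\to\hat X$, $y(x)(\mathfrak x)=a(\mathfrak x,x)$. *)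

(* Defs.v *)
From Stdlib Require Import ClassicalEpsilon.

Record Quantale := {
  qcar : Type;
  qle : qcar -> qcar -> Prop;
  qsup : (qcar -> Prop) -> qcar;
  qtens : qcar -> qcar -> qcar;
  qunit : qcar;
  qle_refl : forall u, qle u u;
  qle_trans : forall u v w, qle u v -> qle v w -> qle u w;
  qle_antisym : forall u v, qle u v -> qle v u -> u = v;
  qsup_ub : forall (S : qcar -> Prop) u, S u -> qle u (qsup S);
  qsup_least : forall (S : qcar -> Prop) w, (forall u, S u -> qle u w) -> qle (qsup S) w;
  qtens_assoc : forall u v w, qtens u (qtens v w) = qtens (qtens u v) w;
  qtens_comm : forall u v, qtens u v = qtens v u;
  qtens_unit : forall u, qtens qunit u = u;
  qtens_sup : forall u (S : qcar -> Prop),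
      qtens u (qsup S) = qsup (fun w => exists v, S v /\ w = qtens u v)
}.

Record SetMonad := {
  mT : Type -> Type;
  mmap : forall A B : Type, (A -> B) -> mT A -> mT B;
  meta : forall A : Type, A -> mT A;
  mmu : forall A : Type, mT (mT A) -> mT A;
  mmap_id : forall A (x : mT A), mmap A A (fun a => a) x = x;
  mmap_comp : forall A B C (f : A -> B) (g : B -> C) (x : mT A),
      mmap A C (fun a => g (f a)) x = mmap B C g (mmap A B f x);
  meta_nat : forall A B (f : A -> B) (a : A), mmap A B f (meta A a) = meta B (f a);
  mmu_nat : forall A B (f : A -> B) (X : mT (mT A)),
      mmap A B f (mmu A X) = mmu B (mmap (mT A) (mT B) (mmap A B f) X);
  mmu_eta : forall A (x : mT A), mmu A (meta (mT A) x) = x;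
  mmu_map_eta : forall A (x : mT A), mmu A (mmap A (mT A) (meta A) x) = x;
  mmu_assoc : forall A (X : mT (mT (mT A))),
      mmu A (mmu (mT A) X) = mmu A (mmap (mT (mT A)) (mT A) (mmu A) X)
}.

Arguments mmap s {A B} _ _.
Arguments meta s {A} _.
Arguments mmu s {A} _.
Set Implicit Arguments.

Record TopTheory := {
  thM : SetMonad;
  thV : Quantale;
  xi : mT thM (qcar thV) -> qcar thV;
  (* T1 = 1 *)
  th_T1 : forall u v : mT thM unit, u = v;
  (* T sends (the canonical) pullbacks to weak pullbacks *)
  th_wpb : forall A B C (f : A -> C) (g : B -> C) (x : mT thM A) (y : mT thM B),
      mmap thM f x = mmap thM g y ->
      exists w : mT thM {p : A * B | f (fst p) = g (snd p)},
        mmap thM (fun p => fst (proj1_sig p)) w = x /\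
        mmap thM (fun p => snd (proj1_sig p)) w = y;
  (* naturality squares of m are weak pullbacks *)
  th_mu_wpb : forall A B (f : A -> B) (XX : mT thM (mT thM B)) (x : mT thM A),
      mmu thM XX = mmap thM f x ->
      exists W : mT thM (mT thM A),
        mmu thM W = x /\ mmap thM (mmap thM f) W = XX;
  xi_eta : forall v, xi (meta thM v) = v;
  xi_mu : forall W, xi (mmap thM xi W) = xi (mmu thM W);
  xi_tens : forall w : mT thM (qcar thV * qcar thV),
      xi (mmap thM (fun p => qtens thV (fst p) (snd p)) w)
      = qtens thV (xi (mmap thM fst w)) (xi (mmap thM snd w));
  xi_k : xi (mmap thM (fun _ : unit => qunit thV) (meta thM tt)) = qunit thV;
  (* phi |-> xi . T phi is natural w.r.t. the maps P_V f *)
  xi_nat : forall A B (f : A -> B) (phi : A -> qcar thV) (y : mT thM B),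
      xi (mmap thM (fun b => qsup thV (fun v => exists a, f a = b /\ v = phi a)) y)
      = qsup thV (fun v => exists x, mmap thM f x = y /\ v = xi (mmap thM phi x))
}.


Section Defs.
Variable Th : TopTheory.
Local Notation M := (thM Th).
Local Notation T := (mT (thM Th)).
Local Notation V := (qcar (thV Th)).
Local Notation le := (qle (thV Th)).
Local Notation sup := (qsup (thV Th)).
Local Notation tens := (qtens (thV Th)).
Local Notation k := (qunit (thV Th)).
Local Notation Tm := (mmap (thM Th)).
Local Notation e := (meta (thM Th)).
Local Notation m := (mmu (thM Th)).

Definition vbot : V := sup (fun _ => False).
(* internal hom:  z <= u -o v  iff  z (x) u <= v *)
Definition vhom (u v : V) : V := sup (fun z => le (tens z u) v).
Definition vinf (S : V -> Prop) : V := sup (fun z => forall u, S u -> le z u).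

Definition Vrel (X Y : Type) := X -> Y -> V.
Definition rcomp X Y Z (s : Vrel Y Z) (r : Vrel X Y) : Vrel X Z :=
  fun x z => sup (fun v => exists y, v = tens (r x y) (s y z)).
Definition rconv X Y (r : Vrel X Y) : Vrel Y X := fun y x => r x y.
Definition rmap X Y (f : X -> Y) : Vrel X Y :=
  fun x y => if excluded_middle_informative (f x = y) then k else vbot.
Definition rle X Y (r s : Vrel X Y) : Prop := forall x y, le (r x y) (s x y).

Definition Txi X Y (r : Vrel X Y) : Vrel (T X) (T Y) :=
  fun xx yy => sup (fun v => exists w : T (X * Y),
    Tm fst w = xx /\ Tm snd w = yy /\ v = xi Th (Tm (fun p => r (fst p) (snd p)) w)).

Definition TRel X Y := Vrel (T X) Y.
Definition kcomp X Y Z (b : TRel Y Z) (a : TRel X Y) : TRel X Z :=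
  rcomp b (rcomp (Txi a) (rconv (rmap (@mmu M X)))).

Definition isTcat X (a : TRel X X) : Prop :=
  (forall x, le k (a (e x) x)) /\ rle (kcomp a a) a.
Definition isTfun X Y (a : TRel X X) (b : TRel Y Y) (f : X -> Y) : Prop :=
  forall xx x, le (a xx x) (b (Tm f xx) (f x)).

Definition Estr : TRel unit unit := fun _ _ => k.

Definition isModule X Y (a : TRel X X) (b : TRel Y Y) (phi : TRel X Y) : Prop :=
  rle (kcomp phi a) phi /\ rle (kcomp b phi) phi.

Definition right_adjoint X (a : TRel X X) (psi : TRel X unit) : Prop :=
  exists phi : TRel unit X,
    isModule Estr a phi /\ rle (fun _ _ => k) (kcomp psi phi) /\ rle (kcomp phi psi) a.

Definition tiso Y (b : TRel Y Y) (u v : Y) : Prop :=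
  le k (b (e u) v) /\ le k (b (e v) u).
Definition Lclosure Y (b : TRel Y Y) (Msub : Y -> Prop) (u : Y) : Prop :=
  forall (Z : Type) (c : TRel Z Z), isTcat c ->
  forall f g : Y -> Z, isTfun b c f -> isTfun b c g ->
    (forall y, Msub y -> f y = g y) -> tiso c (f u) (g u).

(** V as a T-category, |X|, and |X| -o V *)
Definition hom_xi : TRel V V := fun vv v => vhom (xi Th vv) v.
Definition absX X : TRel (T X) (T X) := rmap (@mmu M X).
Definition Vfun X := {h : T X -> V | isTfun (absX X) hom_xi h}.
Definition homstruct X : TRel (Vfun X) (Vfun X) :=
  fun pp h => vinf (fun v => exists qq : T (T X * Vfun X),
    Tm snd qq = pp /\
    v = vhom (xi Th (Tm (fun p => proj1_sig (snd p) (fst p)) qq))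
             (proj1_sig h (m (Tm fst qq)))).

Definition opstruct X (a : TRel X X) : TRel (T X) (T X) :=
  let r : Vrel (T X) (T X) :=
    fun xx yy => sup (fun v => exists XX, m XX = xx /\ v = Txi a XX yy) in
  fun XX yy => Txi (rconv r) XX (e yy).

Definition hatX X (a : TRel X X) :=
  {psi : Vfun X | isTfun (opstruct a) hom_xi (proj1_sig psi)}.
Definition hatstruct X (a : TRel X X) : TRel (hatX a) (hatX a) :=
  fun pp h => homstruct (Tm (@proj1_sig _ _) pp) (proj1_sig h).
Definition hatval X (a : TRel X X) (psi : hatX a) : T X -> V :=
  proj1_sig (proj1_sig psi).

Definition yoneda_image X (a : TRel X X) (psi : hatX a) : Prop :=
  exists x, hatval psi = fun xx => a xx x.

End Defs.

(* Main.v *)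
Require Import Defs.
From Stdlib Require Import ClassicalEpsilon FunctionalExtensionality.

Section S.
Variable Th : TopTheory.
Local Notation M := (thM Th).
Local Notation T := (mT (thM Th)).
Local Notation V := (qcar (thV Th)).
Local Notation le := (qle (thV Th)).
Local Notation sup := (qsup (thV Th)).
Local Notation tens := (qtens (thV Th)).
Local Notation k := (qunit (thV Th)).
Local Notation Tm := (mmap (thM Th)).
Local Notation e := (meta (thM Th)).
Local Notation m := (mmu (thM Th)).
Local Notation xi := (xi Th).

Lemma le_refl u : le u u. Proof. apply qle_refl. Qed.
Lemma le_trans u v w : le u v -> le v w -> le u w. Proof. apply qle_trans. Qed.
Lemma le_sup (S : V -> Prop) u v : S u -> le v u -> le v (sup S).
Proof. intros H1 H2. eapply le_trans; [exact H2| apply qsup_ub; exact H1]. Qed.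
Lemma sup_le (S : V -> Prop) w : (forall u, S u -> le u w) -> le (sup S) w.
Proof. apply qsup_least. Qed.

Lemma tens_mono_r w u v : le u v -> le (tens w u) (tens w v).
Proof.
  intros H.
  assert (Hs : sup (fun z => z = u \/ z = v) = v).
  { apply qle_antisym.
    - apply sup_le. intros z [->| ->]; [exact H| apply le_refl].
    - apply le_sup with v; [right; reflexivity| apply le_refl]. }
  rewrite <- Hs, qtens_sup. apply le_sup with (tens w u).
  - exists u. split; [left; reflexivity| reflexivity].
  - apply le_refl.
Qed.
Lemma tens_mono_l w u v : le u v -> le (tens u w) (tens v w).
Proof. intros H. rewrite (qtens_comm _ u), (qtens_comm _ v). now apply tens_mono_r. Qed.
Lemma tens_mono u u' v v' : le u u' -> le v v' -> le (tens u v) (tens u' v').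
Proof. intros. eapply le_trans; [apply tens_mono_l; eauto| apply tens_mono_r; eauto]. Qed.

Lemma tens_sup_le u (S : V -> Prop) w :
  (forall v, S v -> le (tens u v) w) -> le (tens u (sup S)) w.
Proof.
  intros H. rewrite qtens_sup. apply sup_le. intros z [v [Hv ->]]. auto.
Qed.
Lemma sup_tens_le u (S : V -> Prop) w :
  (forall v, S v -> le (tens v u) w) -> le (tens (sup S) u) w.
Proof.
  intros H. rewrite qtens_comm. apply tens_sup_le. intros v Hv. rewrite qtens_comm. auto.
Qed.

Lemma vbot_le u : le (vbot Th) u.
Proof. unfold vbot. apply sup_le. intros _ [] . Qed.
Lemma tens_vbot u : tens u (vbot Th) = vbot Th.
Proof.
  apply qle_antisym; [|apply vbot_le].
  unfold vbot. apply tens_sup_le. intros _ [].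
Qed.

Lemma vhom_intro z u v : le (tens z u) v -> le z (vhom Th u v).
Proof. intros H. unfold vhom. apply le_sup with z; [exact H| apply le_refl]. Qed.
Lemma vhom_elim z u v : le z (vhom Th u v) -> le (tens z u) v.
Proof.
  intros H. eapply le_trans; [apply tens_mono_l; exact H|].
  unfold vhom. apply sup_tens_le. auto.
Qed.
Lemma vinf_lb (S : V -> Prop) u : S u -> le (vinf Th S) u.
Proof. intros H. unfold vinf. apply sup_le. intros z Hz. auto. Qed.
Lemma vinf_glb (S : V -> Prop) z : (forall u, S u -> le z u) -> le z (vinf Th S).
Proof. intros H. unfold vinf. apply le_sup with z; [exact H| apply le_refl]. Qed.
Lemma k_tens u : tens k u = u. Proof. apply qtens_unit. Qed.
Lemma tens_k u : tens u k = u. Proof. rewrite qtens_comm. apply qtens_unit. Qed.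

Lemma Tcomp A B C (f : A -> B) (g : B -> C) x : Tm g (Tm f x) = Tm (fun a => g (f a)) x.
Proof. symmetry. apply mmap_comp. Qed.

Lemma Tconst A B (c : B) (x : T A) : Tm (fun _ => c) x = e c.
Proof.
  transitivity (Tm (fun _ : unit => c) (Tm (fun _ => tt) x)).
  - rewrite Tcomp. reflexivity.
  - rewrite (th_T1 Th (Tm (fun _ => tt) x) (e tt)). apply meta_nat.
Qed.

Lemma Tmap_ext A B (f g : A -> B) x : (forall a, f a = g a) -> Tm f x = Tm g x.
Proof. intros H. replace f with g; [reflexivity| symmetry; apply functional_extensionality; exact H]. Qed.

Lemma fiber_snd A B C (h : A * B -> C) (w : T (A * B)) b :
  Tm snd w = e b -> Tm h w = Tm (fun a => h (a, b)) (Tm fst w).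
Proof.
  intros H.
  assert (H' : Tm snd w = Tm (fun _ : unit => b) (e tt)) by (rewrite meta_nat; exact H).
  destruct (th_wpb Th snd (fun _ : unit => b) w (e tt) H') as [W [HW1 _]].
  subst w. rewrite !Tcomp. apply Tmap_ext.
  intros [[[a b'] u] Hp]. simpl in *. subst. reflexivity.
Qed.

Lemma fiber_fst A B C (h : A * B -> C) (w : T (A * B)) a :
  Tm fst w = e a -> Tm h w = Tm (fun b => h (a, b)) (Tm snd w).
Proof.
  intros H.
  assert (H' : Tm fst w = Tm (fun _ : unit => a) (e tt)) by (rewrite meta_nat; exact H).
  destruct (th_wpb Th fst (fun _ : unit => a) w (e tt) H') as [W [HW1 _]].
  subst w. rewrite !Tcomp. apply Tmap_ext.
  intros [[[a' b] u] Hp]. simpl in *. subst. reflexivity.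
Qed.

Lemma joint A B (x : T A) (y : T B) : exists w : T (A * B), Tm fst w = x /\ Tm snd w = y.
Proof.
  assert (H : Tm (fun _ => tt) x = Tm (fun _ => tt) y) by apply th_T1.
  destruct (th_wpb Th _ _ x y H) as [W [H1 H2]].
  exists (Tm (@proj1_sig _ _) W). rewrite !Tcomp. split; assumption.
Qed.

Lemma xi_const A (c : V) (z : T A) : xi (Tm (fun _ => c) z) = c.
Proof. rewrite Tconst. apply xi_eta. Qed.

Lemma xi_combine A (h1 h2 : A -> V) z :
  xi (Tm (fun t => tens (h1 t) (h2 t)) z) = tens (xi (Tm h1 z)) (xi (Tm h2 z)).
Proof.
  pose proof (xi_tens Th (Tm (fun t => (h1 t, h2 t)) z)) as H.
  rewrite !Tcomp in H. simpl in H. exact H.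
Qed.

Lemma xi_mono A (r s : A -> V) z : (forall t, le (r t) (s t)) -> le (xi (Tm r z)) (xi (Tm s z)).
Proof.
  intros H.
  pose (f := fun p : A + A => match p with inl a => a | inr a => a end).
  pose (phi := fun p : A + A => match p with inl a => r a | inr a => s a end).
  assert (Hs : (fun b => sup (fun v => exists a, f a = b /\ v = phi a)) = s).
  { apply functional_extensionality. intros b. apply qle_antisym.
    - apply sup_le. intros v [[a|a] [Ha ->]]; simpl in Ha; subst; simpl; [apply H| apply le_refl].
    - apply le_sup with (phi (inr b)); [exists (inr b); split; reflexivity| apply le_refl]. }
  pose proof (xi_nat Th f phi z) as Hn. rewrite Hs in Hn. rewrite Hn.
  apply le_sup with (xi (Tm phi (Tm inl z))).
  - exists (Tm inl z). split; [| reflexivity]. rewrite Tcomp. simpl. apply mmap_id.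
  - rewrite Tcomp. simpl. apply le_refl.
Qed.


Lemma Txi_ge A B (r : Vrel Th A B) w :
  le (xi (Tm (fun p => r (fst p) (snd p)) w)) (Txi r (Tm fst w) (Tm snd w)).
Proof. unfold Txi. apply le_sup with (xi (Tm (fun p => r (fst p) (snd p)) w)); [exists w; auto| apply le_refl]. Qed.

Lemma Txi_map A B C (r : Vrel Th A B) (g1 : C -> A) (g2 : C -> B) z :
  le (xi (Tm (fun c => r (g1 c) (g2 c)) z)) (Txi r (Tm g1 z) (Tm g2 z)).
Proof.
  pose proof (Txi_ge A B r (Tm (fun c => (g1 c, g2 c)) z)) as H.
  rewrite !Tcomp in H. simpl in H. exact H.
Qed.

Lemma Txi_le A B (r : Vrel Th A B) xx yy u :
  (forall w, Tm fst w = xx -> Tm snd w = yy -> le (xi (Tm (fun p => r (fst p) (snd p)) w)) u) ->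
  le (Txi r xx yy) u.
Proof. intros H. unfold Txi. apply sup_le. intros v [w [H1 [H2 ->]]]. auto. Qed.

Lemma Txi_e A B (r : Vrel Th A B) x y : le (r x y) (Txi r (e x) (e y)).
Proof.
  pose proof (Txi_ge A B r (e (x, y))) as H. rewrite !meta_nat, xi_eta in H. exact H.
Qed.

Lemma kcomp_ge X Y Z (b : TRel Th Y Z) (a : TRel Th X Y) XX yy z :
  le (tens (Txi a XX yy) (b yy z)) (kcomp b a (m XX) z).
Proof.
  unfold kcomp, rcomp. apply le_sup with (tens (sup (fun v => exists y0,
     v = tens (rconv (rmap Th (@mmu M X)) (m XX) y0) (Txi a y0 yy))) (b yy z)).
  - exists yy. reflexivity.
  - apply tens_mono_l. apply le_sup with (tens k (Txi a XX yy)).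
    + exists XX. unfold rconv, rmap. destruct (excluded_middle_informative (m XX = m XX)); [reflexivity| congruence].
    + rewrite k_tens. apply le_refl.
Qed.

Lemma kcomp_le X Y Z (b : TRel Th Y Z) (a : TRel Th X Y) x z u :
  (forall XX yy, m XX = x -> le (tens (Txi a XX yy) (b yy z)) u) ->
  le (kcomp b a x z) u.
Proof.
  intros H. unfold kcomp, rcomp. apply sup_le. intros v [yy ->].
  apply sup_tens_le. intros v [XX ->]. unfold rconv, rmap.
  destruct (excluded_middle_informative (m XX = x)) as [E|E].
  - rewrite k_tens. auto.
  - rewrite (qtens_comm _ (vbot Th)), tens_vbot, (qtens_comm _ (vbot Th)), tens_vbot. apply vbot_le.
Qed.


Section Cat.
Variable X : Type.
Variable a : TRel Th X X.
Hypothesis Ha : isTcat a.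

Lemma a_trans XX yy x : le (tens (Txi a XX yy) (a yy x)) (a (m XX) x).
Proof. destruct Ha as [_ Ht]. eapply le_trans; [apply kcomp_ge| apply Ht]. Qed.

Lemma Y1 x : isTfun (absX Th X) (hom_xi Th) (fun xx => a xx x).
Proof.
  intros XX y. unfold absX, rmap, hom_xi.
  destruct (excluded_middle_informative (m XX = y)) as [<-|n]; [|apply vbot_le].
  apply vhom_intro. rewrite k_tens.
  eapply le_trans; [|apply (a_trans XX (e x) x)].
  rewrite <- (tens_k (xi (Tm (fun xx => a xx x) XX))).
  apply tens_mono; [| destruct Ha as [Hr _]; apply Hr].
  pose proof (Txi_map _ _ _ a (fun t => t) (fun _ => x) XX) as H.
  rewrite mmap_id, Tconst in H. exact H.
Qed.

Lemma Y2 x : isTfun (opstruct a) (hom_xi Th) (fun xx => a xx x).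
Proof.
  intros XX yy. unfold opstruct, hom_xi. cbv zeta.
  apply Txi_le. intros w H1 H2. apply vhom_intro.
  erewrite fiber_snd by exact H2. rewrite H1, <- xi_combine.
  eapply le_trans; [apply xi_mono with (s := fun _ => a yy x)| rewrite xi_const; apply le_refl].
  intros t. cbv beta. cbn [fst snd]. unfold rconv.
  apply sup_tens_le. intros v [YY [<- ->]]. apply a_trans.
Qed.

Definition ya (x : X) : Vfun Th X := exist _ (fun xx => a xx x) (Y1 x).
Definition yx (x : X) : hatX a := exist _ (ya x) (Y2 x).

Lemma yx_img x : yoneda_image (yx x).
Proof. exists x. reflexivity. Qed.

Lemma psi_mod (psi : hatX a) YY xx :
  le (tens (Txi a YY xx) (hatval psi xx)) (hatval psi (m YY)).
Proof.
  destruct psi as [[p Hp1] Hp2]. unfold hatval. simpl in *.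
  apply vhom_elim.
  specialize (Hp2 (e xx) (m YY)). unfold hom_xi in Hp2.
  rewrite meta_nat, xi_eta in Hp2. eapply le_trans; [|exact Hp2].
  unfold opstruct. cbv zeta. eapply le_trans; [|apply Txi_e]. unfold rconv.
  apply le_sup with (Txi a YY xx); [exists YY; split; reflexivity| apply le_refl].
Qed.

Lemma yon1 (psi : hatX a) xx : le (hatval psi xx) (hatstruct (Tm yx xx) psi).
Proof.
  unfold hatstruct, homstruct. rewrite Tcomp. apply vinf_glb.
  intros u [qq [Hq ->]]. apply vhom_intro.
  simpl in Hq.
  destruct (th_wpb Th snd ya qq xx Hq) as [W [HW1 HW2]].
  assert (E : Tm (fun p => proj1_sig (snd p) (fst p)) qq =
              Tm (fun p : {p : (T X * Vfun Th X) * X | snd (fst p) = ya (snd p)} =>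
                    a (fst (fst (proj1_sig p))) (snd (proj1_sig p))) W).
  { subst qq. rewrite Tcomp. apply Tmap_ext. intros [[[t h] x] Hp]. simpl in *. subst h. reflexivity. }
  rewrite E. rewrite qtens_comm.
  eapply le_trans; [apply tens_mono_l; apply Txi_map|].
  assert (E2 : Tm (fun p : {p : (T X * Vfun Th X) * X | snd (fst p) = ya (snd p)} => fst (fst (proj1_sig p))) W = Tm fst qq).
  { subst qq. rewrite Tcomp. reflexivity. }
  rewrite E2, HW2. apply psi_mod.
Qed.


Lemma yon2 (psi : hatX a) (phi : TRel Th unit X)
  (HC : rle (kcomp phi (fun xx (_ : unit) => hatval psi xx)) a) u x :
  le (phi u x) (hatstruct (e psi) (yx x)).
Proof.
  unfold hatstruct, homstruct. rewrite meta_nat. apply vinf_glb.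
  intros v [qq [Hq ->]]. apply vhom_intro. simpl.
  erewrite fiber_snd by exact Hq. rewrite qtens_comm.
  eapply le_trans; [|apply HC].
  eapply le_trans; [|apply kcomp_ge with (yy := u)].
  apply tens_mono_l.
  pose proof (Txi_map _ _ _ (fun xx (_ : unit) => hatval psi xx) (fun t => t) (fun _ => tt) (Tm fst qq)) as H.
  rewrite mmap_id in H. rewrite (th_T1 Th _ u) in H. exact H.
Qed.

Lemma dir1 (psi : hatX a) (phi : TRel Th unit X)
  (HB : rle (fun _ _ => k) (kcomp (fun xx (_ : unit) => hatval psi xx) phi))
  (HC : rle (kcomp phi (fun xx (_ : unit) => hatval psi xx)) a)
  (Z : Type) (c : TRel Th Z Z) (Hc : isTcat c) (f g : hatX a -> Z)
  (Hf : isTfun (@hatstruct Th X a) c f) (Hg : isTfun (@hatstruct Th X a) c g)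
  (Hfg : forall x, f (yx x) = g (yx x)) :
  le k (c (e (f psi)) (g psi)).
Proof.
  eapply le_trans; [apply (HB (e tt) tt)|].
  apply kcomp_le. intros UU xx _.
  assert (H1 : le (Txi phi UU xx) (xi (Tm (phi (e tt)) xx))).
  { apply Txi_le. intros w _ H2. subst xx. rewrite Tcomp.
    apply xi_mono. intros t. rewrite (th_T1 Th (fst t) (e tt)). apply le_refl. }
  eapply le_trans; [apply tens_mono_l; exact H1|].
  destruct Hc as [_ Hct].
  eapply le_trans; [|apply Hct].
  rewrite <- (mmu_eta _ _ (e (f psi))).
  eapply le_trans; [|apply kcomp_ge with (yy := Tm (fun x => f (yx x)) xx)].
  apply tens_mono.
  - pose proof (Txi_map _ _ _ c (fun _ => e (f psi)) (fun x => f (yx x)) xx) as H.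
    rewrite Tconst in H. eapply le_trans; [|exact H].
    apply xi_mono. intros x.
    eapply le_trans; [apply (yon2 psi phi HC (e tt) x)|].
    pose proof (Hf (e psi) (yx x)) as Hx. rewrite meta_nat in Hx. exact Hx.
  - rewrite (Tmap_ext _ _ _ _ xx Hfg), <- Tcomp.
    eapply le_trans; [apply yon1|]. apply Hg.
Qed.


Section Rev.
Variable psi : hatX a.
Let pv := hatval psi.

Definition G (s : T X -> V) : V :=
  vinf Th (fun v => exists XX, v = vhom Th (xi (Tm pv XX)) (s (m XX))).
Definition phi0 (x : X) : V := G (fun xx => a xx x).
Definition Phi (p : T X * hatX a) : V := tens (xi (Tm phi0 (fst p))) (hatval (snd p) (fst p)).
Definition Ff (s : hatX a) : V := sup (fun v => exists p, snd p = s /\ v = Phi p).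
Definition Gf (s : hatX a) : V := G (hatval s).

Lemma G1 s XX : le (tens (G s) (xi (Tm pv XX))) (s (m XX)).
Proof. apply vhom_elim. apply vinf_lb. exists XX. reflexivity. Qed.

Lemma G2 s t : le (tens (pv t) (G s)) (s t).
Proof.
  rewrite qtens_comm. pose proof (G1 s (e t)) as H.
  rewrite meta_nat, xi_eta, mmu_eta in H. exact H.
Qed.

Lemma phi_mod xx x : le (tens (xi (Tm phi0 xx)) (a xx x)) (phi0 x).
Proof.
  unfold phi0 at 2, G. apply vinf_glb. intros v [XX ->]. apply vhom_intro.
  eapply le_trans; [|apply (a_trans XX xx x)].
  rewrite <- qtens_assoc, (qtens_comm _ (a xx x)), qtens_assoc.
  apply tens_mono_l.
  destruct (joint _ _ XX xx) as [w [H1 H2]].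
  eapply le_trans; [|rewrite <- H1, <- H2; apply Txi_ge].
  subst XX xx. rewrite !Tcomp, qtens_comm, <- xi_combine.
  apply xi_mono. intros [t x']. cbn [fst snd]. apply G2.
Qed.

Lemma homxi_cat : isTcat (hom_xi Th).
Proof.
  split.
  - intros v. unfold hom_xi. rewrite xi_eta. apply vhom_intro. rewrite k_tens. apply le_refl.
  - intros x z. apply kcomp_le. intros VV vv <-. unfold hom_xi. apply vhom_intro.
    rewrite <- qtens_assoc, (qtens_comm _ (vhom Th (xi vv) z)), qtens_assoc.
    eapply le_trans; [apply tens_mono_l|].
    + instantiate (1 := xi vv). apply sup_tens_le. intros u [w [H1 [H2 ->]]].
      rewrite <- xi_mu, <- H1, <- H2, !Tcomp, <- xi_combine. apply xi_mono.
      intros p. apply vhom_elim. apply le_refl.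
    + rewrite qtens_comm. apply vhom_elim. apply le_refl.
Qed.

Lemma Gf_fun : isTfun (@hatstruct Th X a) (hom_xi Th) Gf.
Proof.
  intros SS s. unfold hom_xi. apply vhom_intro.
  unfold Gf at 2, G. apply vinf_glb. intros v [XX ->]. apply vhom_intro.
  destruct (joint _ _ XX SS) as [w [H1 H2]].
  pose (qq := Tm (fun p : T X * hatX a => (fst p, proj1_sig (snd p))) w).
  assert (Hh : le (hatstruct SS s) (vhom Th (xi (Tm (fun p => proj1_sig (snd p) (fst p)) qq))
                  (proj1_sig (proj1_sig s) (m (Tm fst qq))))).
  { unfold hatstruct, homstruct. apply vinf_lb. exists qq. split; [|reflexivity].
    unfold qq. rewrite Tcomp, <- H2, Tcomp. reflexivity. }
  assert (Hf : Tm fst qq = XX) by (unfold qq; rewrite Tcomp; exact H1).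
  rewrite Hf in Hh. unfold qq in Hh. rewrite Tcomp in Hh. cbn [fst snd] in Hh.
  rewrite <- qtens_assoc. eapply le_trans; [|apply vhom_elim; exact Hh].
  apply tens_mono_r. rewrite qtens_comm, <- H1, <- H2, !Tcomp, <- xi_combine.
  apply xi_mono. intros [t s']. cbn [fst snd]. apply (G2 (hatval s') t).
Qed.

Lemma Ff_fun : isTfun (@hatstruct Th X a) (hom_xi Th) Ff.
Proof.
  intros SS s. unfold hom_xi. apply vhom_intro. unfold Ff.
  rewrite (xi_nat Th snd Phi SS). apply tens_sup_le. intros v [ww [Hw ->]].
  unfold Phi at 1. rewrite xi_combine.
  pose (qq := Tm (fun p : T X * hatX a => (fst p, proj1_sig (snd p))) ww).
  assert (Hh : le (hatstruct SS s) (vhom Th (xi (Tm (fun p => proj1_sig (snd p) (fst p)) qq))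
                  (proj1_sig (proj1_sig s) (m (Tm fst qq))))).
  { unfold hatstruct, homstruct. apply vinf_lb. exists qq. split; [|reflexivity].
    unfold qq. rewrite Tcomp, <- Hw, Tcomp. reflexivity. }
  unfold qq in Hh. rewrite !Tcomp in Hh. cbn [fst snd] in Hh.
  apply le_sup with (Phi (m (Tm fst ww), s)); [exists (m (Tm fst ww), s); split; reflexivity|].
  unfold Phi. cbn [fst snd].
  assert (E : xi (Tm (fun p : T X * hatX a => xi (Tm phi0 (fst p))) ww) = xi (Tm phi0 (m (Tm fst ww)))).
  { rewrite <- (Tcomp _ _ _ fst (fun t => xi (Tm phi0 t))), <- (Tcomp _ _ _ (Tm phi0) xi), xi_mu, mmu_nat.
    reflexivity. }
  rewrite E. rewrite qtens_comm, <- qtens_assoc. apply tens_mono_r.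
  rewrite qtens_comm. apply vhom_elim. exact Hh.
Qed.

Lemma agree s : yoneda_image s -> Ff s = Gf s.
Proof.
  intros [x Hx]. unfold Gf. rewrite Hx. fold (phi0 x).
  apply qle_antisym.
  - unfold Ff. apply sup_le. intros v [[t s'] [Hs ->]]. cbn [snd] in Hs. subst s'.
    unfold Phi. cbn [fst snd]. rewrite Hx. apply phi_mod.
  - unfold Ff. apply le_sup with (Phi (e x, s)); [exists (e x, s); split; reflexivity|].
    unfold Phi. cbn [fst snd]. rewrite Hx, meta_nat, xi_eta.
    rewrite <- (tens_k (phi0 x)) at 1. apply tens_mono_r. destruct Ha as [Hr _]. apply Hr.
Qed.

Lemma k_Gf : le k (Gf psi).
Proof.
  unfold Gf, G. apply vinf_glb. intros v [XX ->]. apply vhom_intro. rewrite k_tens.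
  destruct psi as [[p Hp1] Hp2]. unfold hatval in *. simpl in *.
  pose proof (Hp1 XX (m XX)) as H. unfold absX, rmap, hom_xi in H.
  destruct (excluded_middle_informative (m XX = m XX)) as [_|n]; [|congruence].
  apply vhom_elim in H. rewrite k_tens in H. exact H.
Qed.

Lemma dir2 : Lclosure (@hatstruct Th X a) (@yoneda_image Th X a) psi ->
  right_adjoint a (fun xx (_ : unit) => hatval psi xx).
Proof.
  intros HL.
  destruct (HL V (hom_xi Th) homxi_cat Ff Gf Ff_fun Gf_fun agree) as [_ H2].
  unfold hom_xi in H2. rewrite xi_eta in H2. apply vhom_elim in H2. rewrite k_tens in H2.
  assert (HkF : le k (Ff psi)) by (eapply le_trans; [apply k_Gf| exact H2]).
  exists (fun _ x => phi0 x). split; [split|split].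
  - intros u x. apply kcomp_le. intros UU uu _.
    rewrite <- (k_tens (phi0 x)) at 2. apply tens_mono_l.
    apply Txi_le. intros w _ _. unfold Estr. rewrite xi_const. apply le_refl.
  - intros u x. apply kcomp_le. intros UU xx _.
    eapply le_trans; [|apply (phi_mod xx x)]. apply tens_mono_l.
    apply Txi_le. intros w _ H2'. subst xx. rewrite Tcomp. apply le_refl.
  - intros u []. eapply le_trans; [exact HkF|].
    rewrite <- (mmu_eta _ _ u). unfold Ff. apply sup_le.
    intros v [[t s'] [Hs ->]]. cbn [snd] in Hs. subst s'.
    eapply le_trans; [|apply kcomp_ge with (yy := t)].
    unfold Phi. cbn [fst snd]. apply tens_mono_l.
    pose proof (Txi_map _ _ _ (fun (_ : T unit) x => phi0 x) (fun _ => u) (fun t => t) t) as H.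
    rewrite Tconst, mmap_id in H. exact H.
  - intros xx x. apply kcomp_le. intros XX uu <-.
    rewrite qtens_comm. eapply le_trans; [|apply (G1 (fun xx => a xx x) XX)].
    apply tens_mono_r. apply Txi_le. intros w H1 _. subst XX. rewrite Tcomp. apply le_refl.
Qed.

End Rev.

Lemma main_equiv (psi : hatX a) :
  right_adjoint a (fun xx (_ : unit) => hatval psi xx)
  <-> Lclosure (@hatstruct Th X a) (@yoneda_image Th X a) psi.
Proof.
  split.
  - intros [phi [_ [HB HC]]]. intros Z c Hc f g Hf Hg Hfg. split.
    + apply (dir1 psi phi HB HC Z c Hc f g Hf Hg). intros x. apply Hfg. apply yx_img.
    + apply (dir1 psi phi HB HC Z c Hc g f Hg Hf). intros x. symmetry. apply Hfg. apply yx_img.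
  - apply dir2.
Qed.

End Cat.
End S.

Theorem mainTheorem20 :
  forall (Th : TopTheory) (X : Type) (a : TRel Th X X),
    isTcat a ->
    forall psi : hatX a,
      right_adjoint a (fun xx (_ : unit) => hatval psi xx)
      <-> Lclosure (@hatstruct Th X a) (@yoneda_image Th X a) psi.
Proof.
  intros Th X a Ha psi. exact (main_equiv Th X a Ha psi).
Qed.
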